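(* Let $f^*\in L^2(\mathcal D)$ with $\mathbb E_{x\sim\mathcal D}[f^*(x)^2]\le1$. Let $f_{\mathrm{teacher}}$ be any function that is shrinkage-optimal with respect to $f^*$, and let $f_{\mathrm{student}}$ be any function that is shrinkage-optimal with respect to $f_{\mathrm{teacher}}$. Let $\mathcal L_{TE}=\mathbb E_x[(f_{\mathrm{teacher}}(x)-f^*(x))^2]$ and $\mathcal L_{ST}=\mathbb E_x[(f_{\mathrm{student}}(x)-f^*(x))^2]$. Then $$\mathcal L_{ST}\ \ge\ \frac{\big(\sqrt{1+3\mathcal L_{TE}}-\sqrt{1-\mathcal L_{TE}}\big)^2}{4}\ \ge\ \frac34\,\mathcal L_{TE}^2 .$$
   Context: $\mathcal D$ is a probability distribution on an input space $\mathcal X$; $\langle f,g\rangle_{\mathcal D}=\mathbb E_{x\sim\mathcal D}[f(x)g(x)]$. Shrinkage optimality: given $\hat f,f_{\mathrm{train}}:\mathcal X\to\mathbb R$, $\hat f$ is shrinkage-optimal with respect to $f_{\mathrm{train}}$ if for every $0\le\alpha\le1$, $\mathbb E_x[(\hat f(x)-f_{\mathrm{train}}(x))^2]\le\mathbb E_x[(\alpha\hat f(x)-f_{\mathrm{train}}(x))^2]$. All functions are in $L^2(\mathcal D)$. *)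

(* Defs.v *)
From HB Require Import structures.
From mathcomp Require Import all_boot all_order all_algebra.
From mathcomp Require Import all_classical all_reals all_analysis.
Set Implicit Arguments. Unset Strict Implicit. Unset Printing Implicit Defensive.
Import Order.TTheory GRing.Theory Num.Theory.
Local Open Scope classical_set_scope.
Local Open Scope ring_scope.

(* D is a probability measure P on a measurable space T. *)

Definition L2 {d : measure_display} {T : measurableType d} {R : realType}
  (P : probability T R) (f : T -> R) : Prop :=
  measurable_fun setT f /\ P.-integrable setT (fun x => (f x ^+ 2)%:E).

Definition Ex {d : measure_display} {T : measurableType d} {R : realType}
  (P : probability T R) (g : T -> R) : R := Rintegral P setT g.

Definition shrinkage_optimal {d : measure_display} {T : measurableType d}
  {R : realType} (P : probability T R) (fhat ftrain : T -> R) : Prop :=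
  forall alpha : R, 0 <= alpha <= 1 ->
    Ex P (fun x => (fhat x - ftrain x) ^+ 2)
    <= Ex P (fun x => (alpha * fhat x - ftrain x) ^+ 2).

(* Main.v *)
Require Import Defs.
From HB Require Import structures.
From mathcomp Require Import all_boot all_order all_algebra.
From mathcomp Require Import all_classical all_reals all_analysis.
From mathcomp Require Import ring lra.
Import Order.TTheory GRing.Theory Num.Theory.
Local Open Scope ring_scope.

Section M.
Context (d : measure_display) (T : measurableType d) (R : realType) (P : probability T R).
Definition Int (h : T -> R) := P.-integrable setT (EFin \o h).

Lemma mfL2 f : L2 P f -> measurable_fun setT f. Proof. by case. Qed.

Lemma intM f g : L2 P f -> L2 P g -> Int (fun x => f x * g x).
Proof.
move=> [mf If] [mg Ig].
apply: (@le_integrable _ _ _ P setT measurableT _ (EFin \o (fun x => f x ^+ 2 + g x ^+ 2))) => //.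
- by apply/measurable_realfun.measurable_EFinP; apply: measurable_realfun.measurable_funM.
- move=> x _ /=; rewrite lee_fin.
  rewrite [X in _ <= X]ger0_norm; last by rewrite addr_ge0 // sqr_ge0.
  rewrite normrM.
  have h1 : `|f x| ^+ 2 = f x ^+ 2 by rewrite real_normK // num_real.
  have h2 : `|g x| ^+ 2 = g x ^+ 2 by rewrite real_normK // num_real.
  have := sqr_ge0 (`|f x| - `|g x|). nra.
- have -> : (EFin \o (fun x => f x ^+ 2 + g x ^+ 2)) =
     ((fun x => (f x ^+ 2)%:E) \+ (fun x => (g x ^+ 2)%:E))%E by apply: funext.
  exact: integrableD.
Qed.

Lemma intZ k h : Int h -> Int (fun x => k * h x).
Proof.
move=> Ih; have := integrableZl measurableT k Ih.
by apply: eq_integrable => // x _ /=; rewrite EFinM.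
Qed.

Lemma intD h1 h2 : Int h1 -> Int h2 -> Int (fun x => h1 x + h2 x).
Proof.
move=> I1 I2; have := integrableD measurableT I1 I2.
by apply: eq_integrable => // x _ /=; rewrite EFinD.
Qed.

Lemma ExD h1 h2 : Int h1 -> Int h2 -> Ex P (fun x => h1 x + h2 x) = Ex P h1 + Ex P h2.
Proof. by move=> I1 I2; rewrite /Ex RintegralD. Qed.

Lemma ExZ k h : Int h -> Ex P (fun x => k * h x) = k * Ex P h.
Proof. by move=> I; rewrite /Ex RintegralZl. Qed.

Lemma Exquad g1 g2 g3 (a b c : R) h : L2 P g1 -> L2 P g2 -> L2 P g3 ->
  (forall x, h x = (a * g1 x + b * g2 x + c * g3 x) ^+ 2) ->
  Ex P h = a ^+ 2 * Ex P (fun x => g1 x * g1 x) + b ^+ 2 * Ex P (fun x => g2 x * g2 x)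
     + c ^+ 2 * Ex P (fun x => g3 x * g3 x) + 2 * a * b * Ex P (fun x => g1 x * g2 x)
     + 2 * a * c * Ex P (fun x => g1 x * g3 x) + 2 * b * c * Ex P (fun x => g2 x * g3 x).
Proof.
move=> L1 L2' L3 eh.
have -> : h = (fun x => a ^+ 2 * (g1 x * g1 x) + b ^+ 2 * (g2 x * g2 x)
     + c ^+ 2 * (g3 x * g3 x) + 2 * a * b * (g1 x * g2 x)
     + 2 * a * c * (g1 x * g3 x) + 2 * b * c * (g2 x * g3 x)).
  by apply: funext => x; rewrite eh; ring.
have I11 := intM _ _ L1 L1. have I22 := intM _ _ L2' L2'. have I33 := intM _ _ L3 L3.
have I12 := intM _ _ L1 L2'. have I13 := intM _ _ L1 L3. have I23 := intM _ _ L2' L3.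
rewrite !ExD ?ExZ //; repeat apply: intD; exact: intZ.
Qed.

Lemma Exsq g : Ex P (fun x => g x ^+ 2) = Ex P (fun x => g x * g x).
Proof. by congr (Ex P _); apply: funext => x; rewrite expr2. Qed.

End M.
Lemma psd2 (R : realType) (A B C : R) :
  (forall x z : R, 0 <= A * x ^+ 2 + 2 * B * x * z + C * z ^+ 2) -> B ^+ 2 <= A * C.
Proof.
move=> H.
have hA := H 1 0. have hC := H 0 1.
have [Ap|] := ltP 0 A.
  have h1 := H (- B) A.
  have e : A * (- B) ^+ 2 + 2 * B * (- B) * A + C * A ^+ 2 = A * (A * C - B ^+ 2) by ring.
  rewrite e in h1. rewrite -subr_ge0. by rewrite pmulr_rge0 in h1.
move=> A0.
have [Cp|] := ltP 0 C.
  have h1 := H C (- B).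
  have e : A * C ^+ 2 + 2 * B * C * (- B) + C * (- B) ^+ 2 = C * (A * C - B ^+ 2) by ring.
  rewrite e in h1. rewrite -subr_ge0. by rewrite pmulr_rge0 in h1.
move=> C0.
have h3 := H 1 (- B).
nra.
Qed.

Lemma shrink (R : realType) (a b : R) : 0 <= a ->
  (forall al : R, 0 <= al <= 1 -> a - 2 * b <= al ^+ 2 * a - 2 * al * b) -> a <= b.
Proof.
move=> a0 H.
have h0 := H 0 (ltac:(lra)).
have [ab|ba] := leP a b; first by [].
have apos : 0 < a by nra.
set k := b / a.
have bk : b = k * a by rewrite /k mulfVK // gt_eqF.
have k0 : 0 <= k by rewrite /k divr_ge0 //; nra.
have k1 : k <= 1 by rewrite /k ler_pdivrMr //; nra.
have := H k (ltac:(lra)). rewrite bk => hk. nra.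
Qed.

Lemma realmain (R : realType) (s t f p u c : R) :
  (forall x y z : R, 0 <= x ^+ 2 * s + y ^+ 2 * t + z ^+ 2 * f + 2 * x * y * p
        + 2 * x * z * u + 2 * y * z * c) ->
  (forall al : R, 0 <= al <= 1 -> t - 2 * c + f <= al ^+ 2 * t - 2 * al * c + f) ->
  (forall al : R, 0 <= al <= 1 -> s - 2 * p + t <= al ^+ 2 * s - 2 * al * p + t) ->
  f <= 1 ->
  let L := t - 2 * c + f in
  (Num.sqrt (1 + 3 * L) - Num.sqrt (1 - L)) ^+ 2 / 4 <= s - 2 * u + f /\
  3 / 4 * L ^+ 2 <= (Num.sqrt (1 + 3 * L) - Num.sqrt (1 - L)) ^+ 2 / 4.
Proof.
move=> Q HT HS f1 L.
have s0 : 0 <= s by have := Q 1 0 0; lra.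
have t0 : 0 <= t by have := Q 0 1 0; lra.
have L0 : 0 <= L by have := Q 0 1 (-1); rewrite /L; lra.
have tc : t <= c by apply: shrink t0 _ => al hal; have := HT al hal; lra.
have sp : s <= p by apply: shrink s0 _ => al hal; have := HS al hal; lra.
set A := s - p + t / 4.
set C := f - c + t / 4.
set B := u - p / 2 - c / 2 + t / 4.
have CS : B ^+ 2 <= A * C.
  apply: psd2 => x z.
  have -> : A * x ^+ 2 + 2 * B * x * z + C * z ^+ 2 =
    x ^+ 2 * s + (- (x + z) / 2) ^+ 2 * t + z ^+ 2 * f + 2 * x * (- (x + z) / 2) * p +
    2 * x * z * u + 2 * (- (x + z) / 2) * z * c by rewrite /A /B /C; field.
  exact: Q.
have A0 : 0 <= A by have := Q 1 (-1/2) 0; rewrite /A; lra.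
have C0 : 0 <= C by have := Q 0 (-1/2) 1; rewrite /C; lra.
have At : A <= t / 4 by rewrite /A; lra.
have L1 : L <= 1 by rewrite /L; lra.
set a := Num.sqrt (1 + 3 * L).
set b := Num.sqrt (1 - L).
set rt := Num.sqrt t.
set Xn := Num.sqrt A.
set Yn := Num.sqrt C.
have a2 : a ^+ 2 = 1 + 3 * L by rewrite sqr_sqrtr //; lra.
have b2 : b ^+ 2 = 1 - L by rewrite sqr_sqrtr //; lra.
have rt2 : rt ^+ 2 = t by rewrite sqr_sqrtr.
have Xn2 : Xn ^+ 2 = A by rewrite sqr_sqrtr.
have Yn2 : Yn ^+ 2 = C by rewrite sqr_sqrtr.
have a0 : 0 <= a := sqrtr_ge0 _.
have b0 : 0 <= b := sqrtr_ge0 _.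
have rt0 : 0 <= rt := sqrtr_ge0 _.
have Xn0 : 0 <= Xn := sqrtr_ge0 _.
have Yn0 : 0 <= Yn := sqrtr_ge0 _.
have ab : b <= a by rewrite /a /b ler_sqrt; lra.
have rtb : rt <= b by rewrite /rt /b ler_sqrt; rewrite /L; lra.
have Xnr : Xn <= rt / 2.
  have : Xn ^+ 2 <= (rt / 2) ^+ 2 by rewrite Xn2 expr_div_n rt2; lra.
  nra.
have BX : B <= Xn * Yn.
  have : B ^+ 2 <= (Xn * Yn) ^+ 2. rewrite exprMn Xn2 Yn2; exact: CS.
  have : 0 <= Xn * Yn by apply: mulr_ge0.
  nra.
have hint : rt * (a - b) <= b * (a - b) by apply: ler_wpM2r; lra.
have Ybig : rt / 2 + (a - b) / 2 <= Yn.
  have : (rt / 2 + (a - b) / 2) ^+ 2 <= Yn ^+ 2.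
    rewrite Yn2 /C.
    have ec : c = (t + f - L) / 2 by rewrite /L; lra.
    rewrite ec. nra.
  have : 0 <= rt / 2 + (a - b) / 2 by lra.
  nra.
split.
  have e : s - 2 * u + f = A - 2 * B + C by rewrite /A /B /C; field.
  rewrite e.
  have : (a - b) / 2 <= Yn - Xn by lra.
  have : 0 <= (a - b) / 2 by lra.
  nra.
have ab2 : (a * b) ^+ 2 = (1 + 3 * L) * (1 - L) by rewrite exprMn a2 b2.
have : 0 <= (a * b - 1) ^+ 2 := sqr_ge0 _.
nra.
Qed.

Theorem theorem4p3 (d : measure_display) (T : measurableType d) (R : realType)
  (P : probability T R) (fstar fteacher fstudent : T -> R) :
  L2 P fstar -> L2 P fteacher -> L2 P fstudent ->
  Ex P (fun x => fstar x ^+ 2) <= 1 ->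
  shrinkage_optimal P fteacher fstar ->
  shrinkage_optimal P fstudent fteacher ->
  let LTE := Ex P (fun x => (fteacher x - fstar x) ^+ 2) in
  let LST := Ex P (fun x => (fstudent x - fstar x) ^+ 2) in
  (Num.sqrt (1 + 3 * LTE) - Num.sqrt (1 - LTE)) ^+ 2 / 4 <= LST /\
  3 / 4 * LTE ^+ 2 <= (Num.sqrt (1 + 3 * LTE) - Num.sqrt (1 - LTE)) ^+ 2 / 4.
Proof.
move=> LF LT LS hf HT HS LTE LST.
pose E g h := Ex P (fun x => g x * h x).
have Q3 : forall (a b c : R) h, (forall x, h x = (a * fstudent x + b * fteacher x + c * fstar x) ^+ 2) ->
  Ex P h = a ^+ 2 * E fstudent fstudent + b ^+ 2 * E fteacher fteacher
     + c ^+ 2 * E fstar fstar + 2 * a * b * E fstudent fteacher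
     + 2 * a * c * E fstudent fstar + 2 * b * c * E fteacher fstar.
  by move=> a b c h eh; rewrite /E; exact: (@Exquad _ _ _ P _ _ _ _ _ _ _ LS LT LF eh).
have eL : LTE = E fteacher fteacher - 2 * E fteacher fstar + E fstar fstar.
  by rewrite /LTE (Q3 0 1 (-1)) => [|x]; ring.
have eS : LST = E fstudent fstudent - 2 * E fstudent fstar + E fstar fstar.
  by rewrite /LST (Q3 1 0 (-1)) => [|x]; ring.
rewrite eS eL.
apply: (@realmain R _ _ _ (E fstudent fteacher)).
- move=> x y z.
  have H := Q3 x y z (fun w => (x * fstudent w + y * fteacher w + z * fstar w) ^+ 2) (fun w => erefl).
  rewrite /E in H; rewrite -H.
  by apply: Rintegral_ge0 => w _; exact: sqr_ge0.
- move=> al hal; have := HT al hal.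
  rewrite (Q3 0 1 (-1)) => [|x]; last by ring.
  rewrite (Q3 0 al (-1)) => [|x]; last by ring.
  lra.
- move=> al hal; have := HS al hal.
  rewrite (Q3 1 (-1) 0) => [|x]; last by ring.
  rewrite (Q3 al (-1) 0) => [|x]; last by ring.
  lra.
- by rewrite /E -Exsq.
Qed.
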